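(* Let $m\geq 13$ and $n\geq 13$ be integers with $m\equiv 2\pmod 3$ and $n\not\equiv 2\pmod 3$. Then $\gamma_{sR}(C_m\vee C_n)=3$.
   Context: $C_n$ denotes the cycle on $n$ vertices. For a graph $G=(V,E)$ and $x\in V$, $N_G[x]=\{x\}\cup\{y: xy\in E\}$. A signed Roman dominating function (SRDF) on $G$ is a function $f:V\to\{-1,1,2\}$ such that (a) $\sum_{y\in N_G[x]}f(y)\geq 1$ for every $x\in V$, and (b) every vertex $x$ with $f(x)=-1$ is adjacent to at least one vertex $y$ with $f(y)=2$. The weight of $f$ is $\sum_{x\in V}f(x)$, and $\gamma_{sR}(G)$ is the minimum weight of an SRDF on $G$. The join $G_1\vee G_2$ of two graphs has vertex set $V(G_1)\cup V(G_2)$ (disjoint union) and edge set $E(G_1)\cup E(G_2)\cup\{uv: u\in V(G_1), v\in V(G_2)\}$. *)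

(* Defs.v *)
From mathcomp Require Import all_boot all_order all_algebra.
Set Implicit Arguments. Unset Strict Implicit. Unset Printing Implicit Defensive.
Import GRing.Theory Num.Theory.
Local Open Scope ring_scope.

Definition cycle_adj (n : nat) : rel 'I_n :=
  fun i j => (j == (i.+1 %% n)%N :> nat) || (i == (j.+1 %% n)%N :> nat).

Definition join_adj (T1 T2 : finType) (e1 : rel T1) (e2 : rel T2) : rel (T1 + T2) :=
  fun u v => match u, v with
             | inl a, inl b => e1 a b
             | inr a, inr b => e2 a b
             | _, _ => true
             end.

Definition closed_nbhd (T : finType) (e : rel T) (x : T) : {set T} :=
  [set y | (y == x) || e x y].

Definition is_SRDF (T : finType) (e : rel T) (f : {ffun T -> int}) : Prop :=
  (forall x, f x \in [:: -1; 1; 2]) /\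
  (forall x, 1 <= \sum_(y in closed_nbhd e x) f y) /\
  (forall x, f x = -1 -> exists y, e x y /\ f y = 2).

Definition weight (T : finType) (f : {ffun T -> int}) : int := \sum_(x : T) f x.

Definition gamma_sR_eq (T : finType) (e : rel T) (k : int) : Prop :=
  (exists f, is_SRDF e f /\ weight f = k) /\
  (forall f, is_SRDF e f -> k <= weight f).

(* Main.v *)
Require Import Defs.
From mathcomp Require Import all_boot all_order all_algebra zify.
Set Implicit Arguments. Unset Strict Implicit. Unset Printing Implicit Defensive.
Import GRing.Theory Num.Theory.
Local Open Scope ring_scope.

Lemma vS (m : nat) (a : 'I_m) : (ordS a : nat) = if a.+1 == m then 0%N else a.+1.
Proof.
rewrite /ordS /=; case: eqP => [->|h]; first by rewrite modnn.
by rewrite modn_small //; have := ltn_ord a; lia.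
Qed.

Lemma vP (m : nat) (a : 'I_m) : (ord_pred a : nat) = if (a : nat) == 0%N then m.-1 else ((a : nat)).-1.
Proof.
have := ltn_ord a.
rewrite /ord_pred /=; case: eqP => [->|h] ha.
  by rewrite add0n modn_small // -subn1; lia.
have -> : ((a + m).-1 = ((a : nat)).-1 + m)%N by rewrite -!subn1; lia.
by rewrite modnDr modn_small // -subn1; lia.
Qed.

Lemma cyc_nb (m : nat) (hm : (3 <= m)%N) (a : 'I_m) (g : 'I_m -> int) :
 \sum_(b in closed_nbhd (@cycle_adj m) a) g b = g a + g (ordS a) + g (ord_pred a).
Proof.
rewrite (eq_bigl (fun b => b \in [:: a; ordS a; ord_pred a])); last first.
  move=> b; rewrite /closed_nbhd inE /cycle_adj !inE.
  have -> : ((b : nat) == ((a : nat)).+1 %% m)%N = (b == ordS a) by [].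
  have -> : ((a : nat) == ((b : nat)).+1 %% m)%N = (b == ord_pred a).
    by rewrite -(inj_eq (@ordS_inj m)) ord_predK eq_sym.
  done.
rewrite -big_uniq; last first.
  have := ltn_ord a; rewrite /= !inE negb_or; move=> ha.
  apply/and3P; split; last by [].
  - apply/andP; split; apply/eqP => /(congr1 (@nat_of_ord m)); rewrite ?vS ?vP;
    repeat case: ifP => /eqP ?; lia.
  - by apply/eqP => /(congr1 (@nat_of_ord m)); rewrite ?vS ?vP; repeat case: ifP => /eqP ?; lia.
by rewrite !big_cons big_nil /=; lia.
Qed.

Lemma join_nb_l (T1 T2 : finType) (e1 : rel T1) (e2 : rel T2) (F : T1 + T2 -> int) a :
 \sum_(y in closed_nbhd (join_adj e1 e2) (inl a)) F y =
 \sum_(b in closed_nbhd e1 a) F (inl b) + \sum_c F (inr c).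
Proof.
rewrite big_mkcond big_sumType /=; congr (_ + _).
  by rewrite [RHS]big_mkcond; apply: eq_bigr => b _; rewrite /closed_nbhd !inE.
by apply: eq_bigr => c _; rewrite /closed_nbhd !inE /=.
Qed.

Lemma join_nb_r (T1 T2 : finType) (e1 : rel T1) (e2 : rel T2) (F : T1 + T2 -> int) c :
 \sum_(y in closed_nbhd (join_adj e1 e2) (inr c)) F y =
 \sum_b F (inl b) + \sum_(d in closed_nbhd e2 c) F (inr d).
Proof.
rewrite big_mkcond big_sumType /=; congr (_ + _).
  by apply: eq_bigr => b _; rewrite /closed_nbhd !inE /=.
by rewrite [RHS]big_mkcond; apply: eq_bigr => b _; rewrite /closed_nbhd !inE.
Qed.

Lemma cyc_sum3 (m : nat) (g : 'I_m -> int) :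
  \sum_a (g a + g (ordS a) + g (ord_pred a)) = 3 * \sum_a g a.
Proof.
rewrite !big_split /=.
have -> : \sum_a g (ordS a) = \sum_a g a by rewrite [RHS](reindex_inj (@ordS_inj m)).
have -> : \sum_a g (ord_pred a) = \sum_a g a by rewrite [RHS](reindex_inj (@ord_pred_inj m)).
have -> : (3 : int) = 1 + 1 + 1 by []. by rewrite !mulrDl !mul1r.
Qed.

Lemma sum_ge_list (T : finType) (s : T -> int) (l : seq T) :
  uniq l -> (forall x, 0 <= s x) -> \sum_(x <- l) s x <= \sum_x s x.
Proof.
move=> ul hs; rewrite (big_uniq _ ul) [X in _ <= X](bigID (fun x => x \in l)) /=.
by rewrite lerDl sumr_ge0.
Qed.

Lemma vals (x : int) : x \in [:: -1; 1; 2] -> [\/ x = -1, x = 1 | x = 2].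
Proof. by rewrite !inE => /or3P[]/eqP->; [constructor 1|constructor 2|constructor 3]. Qed.

Lemma vS' m (a : 'I_m) : ((a:nat).+1 = m /\ (ordS a : nat) = 0%N) \/
   ((a:nat).+1 < m /\ (ordS a : nat) = (a:nat).+1)%N.
Proof. rewrite vS; have := ltn_ord a; case: eqP => ?; lia. Qed.

Lemma vP' m (a : 'I_m) : ((a:nat) = 0%N /\ ((ord_pred a : nat) + 1 = m)%N) \/
   (0 < a /\ (ord_pred a : nat) + 1 = a)%N.
Proof. rewrite vP; have := ltn_ord a; case: eqP => ?; rewrite -?subn1; lia. Qed.

Lemma cyc_key (n : nat) (hn : (4 < n)%N) (f : 'I_n -> int) :
  (forall x, f x \in [:: -1; 1; 2]) ->
  (forall a, 0 <= f a + f (ordS a) + f (ord_pred a)) ->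
  \sum_a f a = 1 -> (n %% 3 = 2)%N.
Proof.
move=> hv hw hs.
pose s := fun a => f a + f (ordS a) + f (ord_pred a).
have hS : \sum_a s a = 3 by rewrite /s cyc_sum3 hs.
have hw1 : forall a, f a = 1 \/ f (ordS a) = 1 \/ f (ord_pred a) = 1 -> 1 <= s a.
  move=> a; move: (hw a); rewrite /s.
  by case: (vals (hv a)) => ->; case: (vals (hv (ordS a))) => ->;
    case: (vals (hv (ord_pred a))) => ->; lia.
case: (pickP (fun c => f c == 1)) => [c /eqP hc | hno].
  exfalso.
  have w0 : 1 <= s c by apply: hw1; left.
  have w1 : 1 <= s (ordS c) by apply: hw1; right; right; rewrite ordSK.
  have w2 : 1 <= s (ord_pred c) by apply: hw1; right; left; rewrite ord_predK.
  have h0 := ltn_ord c.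
  have h1 := vS' c. have h2 := vS' (ordS c). have h3 := vP' c. have h4 := vP' (ord_pred c).
  have u3 : uniq [:: ord_pred c; c; ordS c].
    rewrite /= !inE !negb_or; repeat (apply/andP; split); try done;
    apply/eqP => /(congr1 (@nat_of_ord _)); lia.
  have := sum_ge_list u3 hw; rewrite hS !big_cons big_nil /= => h5.
  move: w0 w1 w2 h5; rewrite /s !ordSK !ord_predK => w0 w1 w2 h5.
  have sc1 : f (ordS c) + f (ord_pred c) = 0 by lia.
  case: (vals (hv (ordS c))) => hSc; case: (vals (hv (ord_pred c))) => hPc; try lia.
    have w3 : 1 <= s (ord_pred (ord_pred c)) by apply: hw1; right; left; rewrite ord_predK.
    have u4 : uniq [:: ord_pred (ord_pred c); ord_pred c; c; ordS c].
      rewrite /= !inE !negb_or; repeat (apply/andP; split); try done;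
      apply/eqP => /(congr1 (@nat_of_ord _)); lia.
    have := sum_ge_list u4 hw; rewrite hS !big_cons big_nil /= => h6.
    move: w3 h6; rewrite /s !ordSK !ord_predK => w3 h6.
    lia.
  have w3 : 1 <= s (ordS (ordS c)) by apply: hw1; right; right; rewrite ordSK.
  have u4 : uniq [:: ord_pred c; c; ordS c; ordS (ordS c)].
    rewrite /= !inE !negb_or; repeat (apply/andP; split); try done;
    apply/eqP => /(congr1 (@nat_of_ord _)); lia.
  have := sum_ge_list u4 hw; rewrite hS !big_cons big_nil /= => h6.
  move: w3 h6; rewrite /s !ordSK !ord_predK => w3 h6.
  lia.
have e : forall c, f c + 1 = 3 * (if f c == 2 then 1 else 0).
  move=> c; have := hno c; rewrite /=.
  by case: (vals (hv c)) => ->.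
have : \sum_c (f c + 1) = 1 + n%:R by rewrite big_split /= hs sumr_const card_ord.
rewrite (eq_bigr _ (fun c _ => e c)) -mulr_sumr natz.
lia.
Qed.

Definition Q (i : nat) : int := if (i %% 3 == 0)%N then 2 else -1.

Lemma Qsum m : \sum_(i < m) Q i =
  if (m %% 3 == 0)%N then 0 else if (m %% 3 == 1)%N then 2 else 1.
Proof.
elim: m => [|m IH]; first by rewrite big_ord0.
rewrite big_ord_recr /= IH /Q; repeat case: ifP => /eqP ?; lia.
Qed.

Lemma Qwin m (a : 'I_m) : 0 <= Q a + Q (ordS a) + Q (ord_pred a).
Proof.
have h1 := vS' a; have h2 := vP' a; have h3 := ltn_ord a.
rewrite /Q; repeat case: ifP => /eqP ?; lia.
Qed.

Theorem mainTheorem10 (m n : nat) :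
  (13 <= m)%N -> (13 <= n)%N -> (m %% 3 = 2)%N -> (n %% 3 != 2)%N ->
  gamma_sR_eq (join_adj (@cycle_adj m) (@cycle_adj n)) 3.
Proof.
move=> hm hn hm3 hn3; split.
  pose bump (c : 'I_n) : int := if ((c : nat) == 1%N) && (n %% 3 == 0)%N then 2 else 0.
  have bump0 : forall c, 0 <= bump c by move=> c; rewrite /bump; case: ifP.
  pose F : {ffun 'I_m + 'I_n -> int} :=
    [ffun y : ('I_m + 'I_n)%type => match y with inl b => Q b | inr c => Q c + bump c end].
  have s1 : \sum_(b : 'I_m) Q b = 1 by rewrite Qsum hm3.
  have s2 : \sum_(c : 'I_n) (Q c + bump c) = 2.
    rewrite big_split /= Qsum.
    case: (n %% 3 =P 0)%N => h0.
      have h1 : (1 < n)%N by lia.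
      rewrite (bigD1 (Ordinal h1)) //= big1 => [|c hc].
        by rewrite /bump h0 eqxx /=.
      rewrite /bump; case: eqP => //= e1; move: hc.
      by have -> : c = Ordinal h1 by apply: val_inj.
    rewrite big1 => [|c _]; last by rewrite /bump; move/eqP/negbTE: h0 => ->; rewrite andbF.
    case: ifP => /eqP ?; lia.
  have hF1 : \sum_b F (inl b) = 1 by rewrite -s1; apply: eq_bigr => b _; rewrite ffunE.
  have hF2 : \sum_c F (inr c) = 2 by rewrite -s2; apply: eq_bigr => b _; rewrite ffunE.
  have m0 : (0 < m)%N by lia.
  have n0 : (0 < n)%N by lia.
  exists F; split; last by rewrite /weight big_sumType /= hF1 hF2.
  split; last split.
  - move=> [b|c]; rewrite ffunE /Q /bump.
      by case: ifP.
    case: ifP => hc3; case: ifP => // /andP[/eqP e _]; by rewrite e in hc3.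
  - move=> [a|c].
      rewrite join_nb_l cyc_nb ?hF2 ?ffunE; last lia.
      have := Qwin a; lia.
    rewrite join_nb_r cyc_nb ?hF1 ?ffunE; last lia.
    have := Qwin c; have := bump0 c; have := bump0 (ordS c); have := bump0 (ord_pred c); lia.
  - move=> [a|c] _.
      by exists (inr (Ordinal n0)); split; [|rewrite ffunE /Q /bump /=].
    by exists (inl (Ordinal m0)); split; [|rewrite ffunE /Q /=].
move=> F [hv [hN _]].
pose f1 b := F (inl b); pose f2 c := F (inr c).
have hw : weight F = \sum_b f1 b + \sum_c f2 c by rewrite /weight big_sumType.
have h1 : forall a, 1 <= f1 a + f1 (ordS a) + f1 (ord_pred a) + \sum_c f2 c.
  move=> a; have := hN (inl a); rewrite join_nb_l cyc_nb; last lia.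
  rewrite /f1 /f2 /=; lia.
have h2 : forall c, 1 <= f2 c + f2 (ordS c) + f2 (ord_pred c) + \sum_b f1 b.
  move=> c; have := hN (inr c); rewrite join_nb_r cyc_nb; last lia.
  rewrite /f1 /f2 /=; lia.
have H1 : m%:Z <= 3 * \sum_b f1 b + (\sum_c f2 c) * m%:Z.
  have : \sum_(a : 'I_m) (1:int) <= \sum_a (f1 a + f1 (ordS a) + f1 (ord_pred a) + \sum_c f2 c).
    by apply: ler_sum => a _; exact: h1 a.
  by rewrite big_split /= cyc_sum3 !sumr_const card_ord -[Posz m]natz mulr_natr.
have H2 : n%:Z <= 3 * \sum_c f2 c + (\sum_b f1 b) * n%:Z.
  have : \sum_(a : 'I_n) (1:int) <= \sum_a (f2 a + f2 (ordS a) + f2 (ord_pred a) + \sum_b f1 b).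
    by apply: ler_sum => a _; exact: h2 a.
  by rewrite big_split /= cyc_sum3 !sumr_const card_ord -[Posz n]natz mulr_natr.
rewrite hw; have [//|hlt] := lerP 3 (\sum_b f1 b + \sum_c f2 c).
exfalso.
set A := \sum_b f1 b in H1 H2 hlt h2; set B := \sum_c f2 c in H1 H2 hlt h1.
have hB : 1 <= B by nia.
have hA : 1 <= A by nia.
have hA1 : A = 1 by lia.
have hB1 : B = 1 by lia.
move/eqP: hn3; apply.
apply: (@cyc_key n _ f2).
- lia.
- by move=> x; apply: hv.
- by move=> a; have := h2 a; rewrite hA1; lia.
- exact: hB1.
Qed.
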